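(* Let $n_1<n_2<n_3<\cdots$ be the colossally abundant numbers listed in increasing order. Then $$\lim_{i\to\infty}\frac{\log n_{i-1}}{\log n_i}=1.$$
   Context: $\sigma(n)=\sum_{d\mid n}d$. A positive integer $n$ is colossally abundant if there exists $\varepsilon>0$ such that $\sigma(k)/k^{1+\varepsilon}\le \sigma(n)/n^{1+\varepsilon}$ for all $k\in\mathbb N$. There are infinitely many colossally abundant numbers; the first few are $2,6,12,60,120,360,2520,5040,\dots$. *)

(* Defs.v *)
From Stdlib Require Import Reals Arith List.
Open Scope R_scope.

(* sigma n = sum of the positive divisors of n (sigma 0 = 0, never used). *)
Definition sigma (n : nat) : nat :=
  fold_right Nat.add 0%nat
    (filter (fun d => Nat.eqb (Nat.modulo n d) 0) (seq 1 n)).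

Definition colossally_abundant (n : nat) : Prop :=
  (1 <= n)%nat /\
  exists eps : R, 0 < eps /\
    forall k : nat, (1 <= k)%nat ->
      INR (sigma k) / Rpower (INR k) (1 + eps)
      <= INR (sigma n) / Rpower (INR n) (1 + eps).

(* Main.v *)
Require Import Defs.
From Stdlib Require Import Reals Arith.
From Stdlib Require Import Lia Lra ZArith.
From mathcomp Require all_boot zify.
From mathcomp Require Import ssreflect ssrfun ssrbool.
Require Import Defs.

Module NT.
Import all_boot.
Open Scope nat_scope.

Lemma modE n d : 0 < d -> Nat.modulo n d = n %% d.
Proof. move=> h. symmetry. apply: Nat.mod_unique. apply/ltP. exact: ltn_pmod.
 rewrite {1}(divn_eq n d). rewrite mulnC. by rewrite plusE multE. Qed.
Lemma seqE a n : List.seq a n = iota a n.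
Proof. elim: n a => [|n IH] a //=; by rewrite IH. Qed.
Lemma filterE (T:Type) (p : T -> bool) s : List.filter p s = seq.filter p s.
Proof. by elim: s => //= x s ->. Qed.
Lemma sigma_iota n : sigma n = \sum_(d <- iota 1 n | d %| n) d.
Proof.
rewrite /sigma seqE filterE -big_filter.
have -> : seq.filter (fun d => Nat.eqb (Nat.modulo n d) 0) (iota 1 n) = [seq d <- iota 1 n | d %| n].
  apply: eq_in_filter => d; rewrite mem_iota => /andP[d1 _].
  by rewrite modE.
elim: (seq.filter _ _) => [|x s /= ->]; by rewrite ?big_nil ?big_cons.
Qed.

Lemma sigma_div n : 0 < n -> sigma n = \sum_(d <- divisors n) d.
Proof.
move=> n0; rewrite sigma_iota -big_filter; congr bigop.
apply: (irr_sorted_eq (leT := ltn)).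
- exact: ltn_trans.
- move=> x; exact: ltnn.
- apply: sorted_filter; [exact: ltn_trans | exact: iota_ltn_sorted].
- exact: sorted_divisors_ltn.
move=> d; rewrite mem_filter mem_iota -dvdn_divisors //.
case dn: (d %| n); rewrite ?andbF ?andbT //.
have d0 : 0 < d by apply: (dvdn_gt0 n0 dn).
rewrite /= add1n ltnS dvdn_leq // ?d0 /=; exact: dvdn_leq.
Qed.

Lemma perm_div_mul a b : coprime a b -> 0 < a -> 0 < b ->
  perm_eq (divisors (a * b)) [seq x * y | x <- divisors a, y <- divisors b].
Proof.
move=> co a0 b0; apply: uniq_perm.
- exact: divisors_uniq.
- apply: allpairs_uniq; try exact: divisors_uniq.
  move=> [x y] [x' y'] /allpairsP[[x1 y1] /= [hx hy [-> ->]]].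
  move=> /allpairsP[[x2 y2] /= [hx' hy' [-> ->]]] /= E.
  rewrite -!dvdn_divisors // in hx hy hx' hy'.
  have cy : coprime a y1 by apply: (coprime_dvdr hy).
  have cy' : coprime a y2 by apply: (coprime_dvdr hy').
  have ex : x1 = x2.
    have := Gauss_gcdl x1 cy; rewrite E (Gauss_gcdl x2 cy').
    by rewrite (gcdn_idPr hx) (gcdn_idPr hx').
  subst x2; congr pair; apply/eqP; rewrite -(eqn_pmul2l (m := x1)) ?E //.
  by apply: (dvdn_gt0 a0 hx).
move=> d; rewrite -dvdn_divisors ?muln_gt0 ?a0 //; apply/idP/allpairsP.
- move=> dab.
  have d0 : 0 < d by apply: (dvdn_gt0 _ dab); rewrite muln_gt0 a0.
  set y := gcdn d b.
  have y0 : 0 < y by rewrite gcdn_gt0 d0.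
  have yd : y %| d by exact: dvdn_gcdl.
  have yb : y %| b by exact: dvdn_gcdr.
  set z := d %/ y; set w := b %/ y.
  have dE : d = z * y by rewrite divnK.
  have bE : b = w * y by rewrite divnK.
  have czw : coprime z w.
    rewrite /coprime; apply/eqP; apply/eqP; rewrite -(eqn_pmul2r y0) mul1n.
    by rewrite muln_gcdl -dE -bE.
  have za : z %| a.
    rewrite -(Gauss_dvdl _ czw) -(dvdn_pmul2r y0) -dE -mulnA -bE //.
  exists (z, y); split => /=; rewrite -?dvdn_divisors //.
- case=> [[x y] /= [hx hy ->]]; rewrite -!dvdn_divisors // in hx hy.
  exact: dvdn_mul.
Qed.

Lemma sigma_mul a b : coprime a b -> 0 < a -> 0 < b -> sigma (a * b) = sigma a * sigma b.
Proof.
move=> co a0 b0; rewrite !sigma_div ?muln_gt0 ?a0 //.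
rewrite (perm_big _ (@perm_div_mul a b co a0 b0)) /=.
rewrite big_allpairs_dep /= big_distrl /=; apply: eq_bigr => x _.
by rewrite big_distrr.
Qed.
End NT.

Module NT2.
Import all_boot.
Import NT.
Open Scope nat_scope.

Lemma sigma_pow p j : prime p -> sigma (p ^ j) = \sum_(i < j.+1) p ^ i.
Proof.
move=> pp; have p1 := prime_gt1 pp; have p0 := prime_gt0 pp.
rewrite sigma_div ?expn_gt0 ?p0 //.
have Hp : perm_eq (divisors (p ^ j)) [seq p ^ i | i <- iota 0 j.+1].
  apply: uniq_perm; first exact: divisors_uniq.
    rewrite map_inj_uniq ?iota_uniq //; exact: expnI.
  move=> d; rewrite -dvdn_divisors ?expn_gt0 ?p0 //; apply/idP/mapP.
    by case/(dvdn_pfactor _ _ pp) => m mj ->; exists m; rewrite // mem_iota ltnS.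
  by case=> m; rewrite mem_iota ltnS => /andP[_ mj] ->; apply/(dvdn_pfactor _ _ pp); exists m.
by rewrite (perm_big _ Hp) big_map -(big_mkord xpredT (fun i => p ^ i)) /index_iota subn0.
Qed.

Lemma sigma_powS p j : prime p -> sigma (p ^ j.+1) = 1 + p * sigma (p ^ j).
Proof.
move=> pp; rewrite !sigma_pow // big_ord_recl expn0 big_distrr /=; congr addn.
by apply: eq_bigr => i _; rewrite expnS.
Qed.

Lemma sigma1 : sigma 1 = 1.
Proof. by []. Qed.

Lemma sigma_gt0 k : 0 < k -> 0 < sigma k.
Proof.
move=> k0; rewrite sigma_div // (big_rem 1) ?divisor1 //.
Qed.
End NT2.

Module NT3.
Import eqtype ssrnat seq div prime bigop path fintype.
Import NT NT2.
Open Scope nat_scope.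

Definition f (e : R) (k : nat) : R := (INR (sigma k) / Rpower (INR k) (1 + e))%R.

Lemma INR_pos k : 0 < k -> (0 < INR k)%R.
Proof. by move=> /ltP h; apply: lt_0_INR. Qed.

Lemma Rpower_pos x y : (0 < Rpower x y)%R.
Proof. rewrite /Rpower; exact: exp_pos. Qed.

Lemma f_pos e k : 0 < k -> (0 < f e k)%R.
Proof.
move=> k0; rewrite /f; apply: Rdiv_lt_0_compat; last exact: Rpower_pos.
by apply: INR_pos; apply: sigma_gt0.
Qed.

Lemma f_mul e a b : coprime a b -> 0 < a -> 0 < b -> f e (a * b) = (f e a * f e b)%R.
Proof.
move=> co a0 b0; rewrite /f sigma_mul // -!multE !mult_INR.
rewrite -Rpower_mult_distr; try exact: INR_pos.
have h1 := Rpower_pos (INR a) (1 + e); have h2 := Rpower_pos (INR b) (1 + e).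
field; lra.
Qed.

Lemma f_powS e p j : prime p ->
  (f e (p ^ j.+1) * Rpower (INR p) (1 + e) * INR (sigma (p ^ j)) =
   f e (p ^ j) * INR (sigma (p ^ j.+1)))%R.
Proof.
move=> pp; have p0 := prime_gt0 pp.
rewrite /f expnSr -multE mult_INR -Rpower_mult_distr; try apply: INR_pos; rewrite ?expn_gt0 ?p0 //.
have h1 := Rpower_pos (INR (p ^ j)) (1 + e); have h2 := Rpower_pos (INR p) (1 + e).
field; lra.
Qed.

Lemma sigma_log_concave p j : prime p ->
  (INR (sigma (p ^ j.+2)) * INR (sigma (p ^ j)) < INR (sigma (p ^ j.+1)) * INR (sigma (p ^ j.+1)))%R.
Proof.
move=> pp; rewrite !sigma_powS //.
have h : 0 < sigma (p ^ j) by apply: sigma_gt0; rewrite expn_gt0 prime_gt0.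
have p1 := prime_gt1 pp.
set X := sigma (p ^ j) in h *.
rewrite -!multE -!plusE -!mult_INR; apply: lt_INR.
move/ltP: h => h; move/ltP: p1 => p1; nia.
Qed.

Lemma unimodal (u A : nat -> R) (c : R) (b : nat) :
  (0 < c)%R -> (forall j, 0 < A j)%R -> (forall j, 0 < u j)%R ->
  (forall j, u (S j) * c * A j = u j * A (S j))%R ->
  (forall j, A (S (S j)) * A j < A (S j) * A (S j))%R ->
  (A (S b) <= c * A b)%R -> (b = 0%N \/ c * A (b.-1) <= A b)%R ->
  forall j, (u j <= u b)%R.
Proof.
move=> c0 Apos upos rel lc hb1 hb2.
have down : forall j, (A (S j) <= c * A j)%R -> (A (S (S j)) <= c * A (S j))%R.
  move=> j h; have := lc j; have := Apos j; have := Apos (S j); nra.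
have up : forall i, (c * A (S i) <= A (S (S i)))%R -> (c * A i <= A (S i))%R.
  move=> i h; have := lc i; have := Apos i; have := Apos (S i); nra.
have downk : forall k, (A (S (b + k)%N) <= c * A (b + k)%N)%R.
  elim=> [|k IH]; first by rewrite addn0.
  by rewrite addnS; apply: down.
have upk : forall k, k < b -> (c * A k <= A (S k))%R.
  move=> k kb; case: b hb1 hb2 downk kb => // b' _ hb2 _ kb.
  case: hb2 => // hb2; rewrite /= in hb2.
  have : forall d, d <= b' -> (c * A (b' - d)%N <= A (S (b' - d)%N))%R.
    elim=> [|d IH] hd; first by rewrite subn0.
    apply: up; rewrite -subSn //; rewrite subSS; apply: IH; exact: ltnW.
  move=> /(_ (b' - k)); rewrite subKn ?leq_subr //; first by apply.
move=> j; case: (leqP b j) => hj.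
- rewrite -(subnKC hj); elim: (j - b) => [|k IH]; first by rewrite addn0; apply: Rle_refl.
  apply: Rle_trans IH; rewrite addnS.
  have := rel (b + k); have := downk k; have := upos (b + k); have := upos (S (b + k)); have := Apos (b + k).
  move=> h1 h2 h3 h4 h5.
  apply: (Rmult_le_reg_r (c * A (b + k))); first by apply: Rmult_lt_0_compat.
  nra.
- have : forall d, d <= b - j -> (u j <= u (j + d)%N)%R.
    elim=> [|d IH] hd; first by rewrite addn0; apply: Rle_refl.
    apply: Rle_trans (IH (ltnW hd)) _; rewrite addnS.
    have hk : j + d < b by rewrite -ltn_subRL.
    have := rel (j + d); have := upk _ hk; have := upos (j + d); have := upos (S (j + d)); have := Apos (j + d).
    move=> h1 h2 h3 h4 h5.
    apply: (Rmult_le_reg_r (c * A (j + d))); first by apply: Rmult_lt_0_compat.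
    nra.
  by move=> /(_ (b - j) (leqnn _)); rewrite subnKC // ltnW.
Qed.
End NT3.

Module NT4.
Import eqtype ssrnat seq div prime bigop path fintype.
Import NT NT2 NT3.
Open Scope nat_scope.

Lemma primes_nil k : 0 < k -> primes k = [::] -> k = 1.
Proof.
move=> k0 h; case: (ltnP 1 k) => k1; last by apply/eqP; rewrite eqn_leq k1 k0.
have : pdiv k \in primes k by rewrite mem_primes pdiv_prime // k0 pdiv_dvd.
by rewrite h.
Qed.

Lemma split_p p k : prime p -> 0 < k ->
  exists k', [/\ 0 < k', coprime p k', k = k' * p ^ logn p k &
     forall q, prime q -> q != p -> logn q k = logn q k'].
Proof.
move=> pp k0; case: (pfactor_coprime pp k0) => k' co E.
have k'0 : 0 < k' by move: k0; rewrite E muln_gt0 => /andP[].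
exists k'; split => // q qp qnp.
have pk : 0 < p ^ logn p k by rewrite expn_gt0 prime_gt0.
rewrite {1}E (lognM _ k'0 pk) lognX (logn_prime q pp).
by rewrite (negbTE qnp) muln0 addn0.
Qed.

Lemma primes_sub p k k' : prime p -> coprime p k' -> 0 < k' -> k = k' * p ^ logn p k -> 0 < k ->
  forall q, q \in primes k' -> q \in primes k /\ q != p.
Proof.
move=> pp co k'0 E k0 q; rewrite !mem_primes => /and3P[qp _ qk]; split.
  by rewrite qp k0 /= E dvdn_mulr.
apply/eqP => eqp; subst q.
by move: co; rewrite /coprime (gcdn_idPl qk) => /eqP h; move: (prime_gt1 qp); rewrite h.
Qed.

Lemma global_aux e (P : seq nat) : uniq P -> all prime P ->
  forall k M, 0 < k -> 0 < M -> {subset primes k <= P} -> {subset primes M <= P} ->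
  (forall p, p \in P -> forall j, (f e (p ^ j) <= f e (p ^ logn p M))%R) ->
  (f e k <= f e M)%R.
Proof.
elim: P => [|p P IH] /=.
  move=> _ _ k M k0 M0 hk hM _.
  have -> : k = 1.
    apply: primes_nil => //; case: (primes k) hk => // x s /(_ x); rewrite inE eqxx /=.
    by move=> /(_ isT).
  have -> : M = 1.
    apply: primes_nil => //; case: (primes M) hM => // x s /(_ x); rewrite inE eqxx /=.
    by move=> /(_ isT).
  exact: Rle_refl.
move=> /andP[pP uP] /andP[pp aP] k M k0 M0 hk hM hloc.
case: (@split_p p k pp k0) => k' [k'0 cok Ek _].
case: (@split_p p M pp M0) => M' [M'0 coM EM lM].
have hk' : {subset primes k' <= P}.
  move=> q /(@primes_sub p k k' pp cok k'0 Ek k0) [qk qnp].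
  by move: (hk q qk); rewrite inE (negbTE qnp).
have hM' : {subset primes M' <= P}.
  move=> q /(@primes_sub p M M' pp coM M'0 EM M0) [qk qnp].
  by move: (hM q qk); rewrite inE (negbTE qnp).
have IH' := IH uP aP k' M' k'0 M'0 hk' hM'.
have : (f e k' <= f e M')%R.
  apply: IH' => q qP j.
  have qnp : q != p by apply/eqP => eq; subst q; rewrite qP in pP.
  have qp : prime q by move/allP: aP => /(_ q qP).
  rewrite -lM //. have hq : q \in p :: P by rewrite inE qP orbT. exact: (hloc q hq j).
move=> hkM.
have pk : 0 < p ^ logn p k by rewrite expn_gt0 prime_gt0.
have pM : 0 < p ^ logn p M by rewrite expn_gt0 prime_gt0.
rewrite {1}Ek {1}EM !f_mul //; try by apply: coprimeXr; rewrite coprime_sym.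
apply: Rmult_le_compat => //; try (apply: Rlt_le; apply: f_pos; by []).
by apply: hloc; rewrite inE eqxx.
Qed.

Lemma global e M : 0 < M ->
  (forall p, prime p -> forall j, (f e (p ^ j) <= f e (p ^ logn p M))%R) ->
  forall k, 0 < k -> (f e k <= f e M)%R.
Proof.
move=> M0 hloc k k0.
apply: (@global_aux e (undup (primes k ++ primes M))) => //.
- exact: undup_uniq.
- by apply/allP => q; rewrite mem_undup mem_cat !mem_primes => /orP[/andP[]|/andP[]].
- by move=> q qk; rewrite mem_undup mem_cat qk.
- by move=> q qM; rewrite mem_undup mem_cat qM orbT.
- move=> p; rewrite mem_undup mem_cat !mem_primes => h; apply: hloc.
  by case/orP: h => /andP[].
Qed.
End NT4.

Module NT5.
Import eqtype ssrnat seq div prime bigop path fintype.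
Import NT NT2 NT3 NT4.
Open Scope nat_scope.

Definition A p j := INR (sigma (p ^ j)).
Definition cc p e := Rpower (INR p) (1 + e).

Lemma A_pos p j : prime p -> (0 < A p j)%R.
Proof. by move=> pp; apply: INR_pos; apply: sigma_gt0; rewrite expn_gt0 prime_gt0. Qed.

Lemma A_S p j : prime p -> A p j.+1 = (1 + INR p * A p j)%R.
Proof. by move=> pp; rewrite /A sigma_powS // -multE -plusE plus_INR mult_INR. Qed.

Lemma A_0 p : A p 0 = 1%R.
Proof. by rewrite /A expn0 sigma1. Qed.

Lemma INR_prime_gt1 {p} : prime p -> (1 < INR p)%R.
Proof. move=> pp; have /ltP h := prime_gt1 pp; by apply: lt_1_INR. Qed.

Lemma cc_pos p e : (0 < cc p e)%R.
Proof. exact: Rpower_pos. Qed.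

Lemma local_max e p b : prime p ->
  (A p b.+1 <= cc p e * A p b)%R -> (b = 0%N \/ cc p e * A p b.-1 <= A p b)%R ->
  forall j, (f e (p ^ j) <= f e (p ^ b))%R.
Proof.
move=> pp h1 h2; apply: (@unimodal (fun j => f e (p ^ j)) (A p) (cc p e) b) => //.
- exact: cc_pos.
- by move=> j; apply: A_pos.
- by move=> j; apply: f_pos; rewrite expn_gt0 prime_gt0.
- by move=> j; rewrite /A /cc f_powS.
- by move=> j; apply: sigma_log_concave.
Qed.

Definition tt p a := (ln (A p a.+1 / A p a) / ln (INR p) - 1)%R.

Lemma ln_p_pos {p} : prime p -> (0 < ln (INR p))%R.
Proof. move=> pp; rewrite -ln_1; apply: ln_increasing; [lra|exact: INR_prime_gt1]. Qed.

Lemma tt_spec p a : prime p -> (cc p (tt p a) * A p a = A p a.+1)%R.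
Proof.
move=> pp; rewrite /cc /tt /Rpower.
have hl := ln_p_pos pp; have h0 := @A_pos p a pp; have h1 := @A_pos p a.+1 pp.
replace ((1 + (ln (A p a.+1 / A p a) / ln (INR p) - 1)) * ln (INR p))%R
  with (ln (A p a.+1 / A p a))%R by (field; lra).
rewrite exp_ln; last by apply: Rdiv_lt_0_compat.
field; lra.
Qed.

Lemma cc_mono {p x y} : prime p -> (x <= y)%R -> (cc p x <= cc p y)%R.
Proof. move=> pp h; apply: Rle_Rpower; [have := INR_prime_gt1 pp; lra | lra]. Qed.

Lemma cc_smono {p x y} : prime p -> (x < y)%R -> (cc p x < cc p y)%R.
Proof. move=> pp h; apply: Rpower_lt; [exact: INR_prime_gt1 | lra]. Qed.

Lemma tt_le p a x : prime p -> (tt p a <= x)%R -> (A p a.+1 <= cc p x * A p a)%R.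
Proof.
move=> pp h; rewrite -(@tt_spec p a pp); apply: Rmult_le_compat_r.
  exact: Rlt_le (@A_pos p a pp).
exact: cc_mono.
Qed.

Lemma tt_ge p a x : prime p -> (A p a.+1 <= cc p x * A p a)%R -> (tt p a <= x)%R.
Proof.
move=> pp h; case: (Rle_lt_dec (tt p a) x) => // hx.
have := cc_smono pp hx; have := @tt_spec p a pp; have := @A_pos p a pp; nra.
Qed.

Lemma cc_1 p e : prime p -> cc p e = (INR p * Rpower (INR p) e)%R.
Proof.
move=> pp; rewrite /cc Rpower_plus Rpower_1 //.
exact: Rlt_trans Rlt_0_1 (INR_prime_gt1 pp).
Qed.

Lemma tt_pos p a : prime p -> (0 < tt p a)%R.
Proof.
move=> pp; case: (Rle_lt_dec (tt p a) 0) => // h.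
have := cc_mono pp h; have := @tt_spec p a pp; have := @A_pos p a pp; rewrite A_S //.
have -> : cc p 0 = INR p by rewrite /cc Rplus_0_r Rpower_1 //; exact: Rlt_trans Rlt_0_1 (INR_prime_gt1 pp).
nra.
Qed.
End NT5.

Module NT6.
Import eqtype ssrnat seq div prime bigop path fintype.
Import NT NT2 NT3 NT4 NT5.
Open Scope nat_scope.

Lemma A_ge1 p j : prime p -> (1 <= A p j)%R.
Proof.
move=> pp; have : 0 < sigma (p ^ j) by apply: sigma_gt0; rewrite expn_gt0 prime_gt0.
move=> /leP h; rewrite /A; have := le_INR _ _ h; by rewrite /=.
Qed.

Lemma cond_up N e q : 0 < N -> prime q -> (forall k, 0 < k -> (f e k <= f e N)%R) ->
  (A q (logn q N).+1 <= cc q e * A q (logn q N))%R.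
Proof.
move=> N0 qp hmax.
case: (@split_p q N qp N0) => N' [N'0 co E _].
have q0 := prime_gt0 qp.
have h := hmax (N * q); have {h} h := h ltac:(by rewrite muln_gt0 N0 q0).
have EN : N * q = N' * q ^ (logn q N).+1 by rewrite {1}E expnSr mulnA.
have qa0 : 0 < q ^ logn q N by rewrite expn_gt0 q0.
have qa1 : 0 < q ^ (logn q N).+1 by rewrite expn_gt0 q0.
rewrite EN {2}E !f_mul // in h; try by apply: coprimeXr; rewrite coprime_sym.
have fN' := f_pos e _ N'0.
have h2 : (f e (q ^ (logn q N).+1) <= f e (q ^ logn q N))%R.
  by apply: (Rmult_le_reg_l (f e N')).
have rel : (f e (q ^ (logn q N).+1) * cc q e * A q (logn q N) = f e (q ^ logn q N) * A q (logn q N).+1)%R := f_powS e q (logn q N) qp.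
have u0 := f_pos e _ qa0; have u1 := f_pos e _ qa1.
have Ap := @A_pos q (logn q N) qp; have cp := cc_pos q e.
apply: (Rmult_le_reg_l (f e (q ^ logn q N))) => //.
rewrite -rel.
have : (0 < cc q e * A q (logn q N))%R by apply: Rmult_lt_0_compat.
nra.
Qed.

Lemma cond_down N e q : 0 < N -> prime q -> (forall k, 0 < k -> (f e k <= f e N)%R) ->
  0 < logn q N -> (cc q e * A q (logn q N).-1 <= A q (logn q N))%R.
Proof.
move=> N0 qp hmax.
case: (@split_p q N qp N0) => N' [N'0 co E _].
have q0 := prime_gt0 qp.
case Ea: (logn q N) => [|b] // _ /=.
have qb0 : 0 < q ^ b by rewrite expn_gt0 q0.
have qb1 : 0 < q ^ b.+1 by rewrite expn_gt0 q0.
have h := hmax (N' * q ^ b); have {h} h := h ltac:(by rewrite muln_gt0 N'0 qb0).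
rewrite {1}E Ea !f_mul // in h; try by apply: coprimeXr; rewrite coprime_sym.
have fN' := f_pos e _ N'0.
have h2 : (f e (q ^ b) <= f e (q ^ b.+1))%R.
  by apply: (Rmult_le_reg_l (f e N')).
have rel : (f e (q ^ b.+1) * cc q e * A q b = f e (q ^ b) * A q b.+1)%R := f_powS e q b qp.
have u0 := f_pos e _ qb0; have u1 := f_pos e _ qb1.
have Ap := @A_pos q b qp; have cp := cc_pos q e.
apply: (Rmult_le_reg_l (f e (q ^ b.+1))) => //.
have : (0 < A q b.+1)%R by apply: A_pos.
nra.
Qed.

Lemma argmax (g : nat -> R) x L : exists2 q, q \in x :: L & forall q', q' \in x :: L -> (g q' <= g q)%R.
Proof.
elim: L x => [|y L IH] x.
  exists x; first by rewrite inE eqxx.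
  by move=> q'; rewrite inE => /eqP ->; apply: Rle_refl.
case: (IH y) => q qin qmax.
case: (Rle_lt_dec (g x) (g q)) => hx.
- exists q; first by rewrite inE qin orbT.
  move=> q'; rewrite inE => /orP[/eqP ->|]; first by [].
  exact: qmax.
- exists x; first by rewrite inE eqxx.
  move=> q'; rewrite inE => /orP[/eqP ->|]; first by apply: Rle_refl.
  move=> /qmax h; lra.
Qed.

Lemma bigger_prime p0 p e : prime p0 -> prime p -> p0 < p -> (0 < e)%R ->
  (1 + INR p0 <= cc p0 e)%R -> (1 + INR p < cc p e)%R.
Proof.
move=> pp0 pp lt e0 h.
rewrite cc_1 // in h; rewrite cc_1 //.
have : (Rpower (INR p0) e < Rpower (INR p) e)%R.
  apply: Rlt_Rpower_l => //; split.
    exact: Rlt_trans Rlt_0_1 (INR_prime_gt1 pp0).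
  by apply: lt_INR; apply/ltP.
have : (INR p0 < INR p)%R by apply: lt_INR; apply/ltP.
have := INR_prime_gt1 pp0.
set R0 := Rpower (INR p0) e in h *; set R1 := Rpower (INR p) e.
set P0 := INR p0 in h *; set P := INR p.
move=> h1 h2 h3.
have h4 : (P * (1 + P0) <= P * (P0 * R0))%R by apply: Rmult_le_compat_l; lra.
have h5 : (P0 * (1 + P) < P0 * (P * R0))%R by nra.
have h6 : (1 + P < P * R0)%R by apply: (Rmult_lt_reg_l P0); lra.
nra.
Qed.
End NT6.

Module NT7.
Import eqtype ssrnat seq div prime bigop path fintype.
Import NT NT2 NT3 NT4 NT5 NT6.
Open Scope nat_scope.

Lemma logn0_ndvd p N : prime p -> 0 < N -> ~~ (p %| N) -> logn p N = 0.
Proof.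
move=> pp N0 nd; apply/eqP; rewrite -leqn0 leqNgt logn_gt0 mem_primes pp N0 /=.
exact: nd.
Qed.

Lemma step N e : 0 < N -> (0 < e)%R -> (forall k, 0 < k -> (f e k <= f e N)%R) ->
  exists p0 q e', [/\ prime p0, ~~ (p0 %| N), (forall p, p < p0 -> prime p -> p %| N),
     prime q & q <= p0] /\ ((0 < e')%R /\ forall k, 0 < k -> (f e' k <= f e' (N * q))%R).
Proof.
move=> N0 e0 hmax.
have ex : exists p, prime p && ~~ (p %| N).
  exists (pdiv N.+1); have pp : prime (pdiv N.+1) by apply: pdiv_prime; rewrite ltnS.
  rewrite pp /=; apply/negP => hd.
  have : pdiv N.+1 %| N + 1 by rewrite addn1 pdiv_dvd.
  rewrite (dvdn_addr _ hd) dvdn1 => /eqP h1.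
  by move: (prime_gt1 pp); rewrite h1.
case: (ex_minnP ex) => p0 /andP[pp0 np0] minp0.
have below : forall p, p < p0 -> prime p -> p %| N.
  move=> p lt pp; apply/negPn/negP => nd.
  by have := minp0 p; rewrite pp nd /= => /(_ isT); rewrite leqNgt lt.
pose T q := tt q (logn q N).
case: (@argmax T p0 (primes N)) => qs qsL qsmax.
have qsp : prime qs.
  by move: qsL; rewrite inE => /orP[/eqP ->|]; rewrite // mem_primes => /andP[].
have a0 : logn p0 N = 0 by apply: logn0_ndvd.
set e' := T qs.
have e'e : (e' <= e)%R by apply: tt_ge => //; apply: cond_up.
have e'0 : (0 < e')%R by apply: tt_pos.
have hp0 : (1 + INR p0 <= cc p0 e')%R.
  have := @tt_le p0 (logn p0 N) e' pp0 (qsmax p0 (mem_head _ _)).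
  by rewrite a0 A_S // A_0; lra.
have Mloc : forall p, prime p -> forall j, (f e' (p ^ j) <= f e' (p ^ logn p (N * qs)))%R.
  move=> p pp; rewrite (lognM _ N0 (prime_gt0 qsp)) (logn_prime p qsp).
  case: (eqVneq p qs) => [->|pq] /=.
  - rewrite addn1; have tie := @tt_spec qs (logn qs N) qsp.
    have lc : (A qs (logn qs N).+2 * A qs (logn qs N) < A qs (logn qs N).+1 * A qs (logn qs N).+1)%R
      := sigma_log_concave qs (logn qs N) qsp.
    rewrite -/(T qs) -/e' in tie.
    apply: local_max => //.
    + have := @A_pos qs (logn qs N) qsp; have := @A_pos qs (logn qs N).+1 qsp.
      have := cc_pos qs e'; move=> h1 h2 h3.
      apply: Rlt_le; apply: (Rmult_lt_reg_r (A qs (logn qs N))) => //.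
      have -> : (cc qs e' * A qs (logn qs N).+1 * A qs (logn qs N) = A qs (logn qs N).+1 * (cc qs e' * A qs (logn qs N)))%R by ring.
      by rewrite tie.
    + by right; rewrite /= tie; apply: Rle_refl.
  - rewrite addn0; apply: local_max => //.
    + case: (boolP (p \in p0 :: primes N)) => pL.
        by apply: tt_le => //; apply: qsmax.
      have pnd : ~~ (p %| N).
        apply/negP => hd; move: pL; rewrite inE mem_primes pp N0 hd /=.
        by rewrite orbT.
      have pn0 : p != p0 by apply: contra pL => /eqP ->; exact: mem_head.
      have lt : p0 < p.
        by rewrite ltn_neqAle eq_sym pn0 /=; apply: minp0; rewrite pp pnd.
      rewrite (@logn0_ndvd p N pp N0 pnd) A_S // A_0 Rmult_1_r Rmult_1_r.
      by apply: Rlt_le; apply: (@bigger_prime p0 p e' pp0 pp lt e'0).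
    + case Ea: (logn p N) => [|b]; first by left.
      right; have := @cond_down N e p N0 pp hmax; rewrite Ea /= => /(_ isT) h.
      apply: Rle_trans h; apply: Rmult_le_compat_r.
        exact: Rlt_le (@A_pos p b pp).
      exact: cc_mono.
exists p0, qs, e'; split; first split => //.
- rewrite leqNgt; apply/negP => lt.
  have qsN : qs \in primes N.
    move: qsL; rewrite inE => /orP[/eqP eqq|] //.
    by move: lt; rewrite eqq ltnn.
  have bp := @bigger_prime p0 qs e' pp0 qsp lt e'0 hp0.
  have tie := @tt_spec qs (logn qs N) qsp; rewrite -/(T qs) -/e' in tie.
  have g1 := @A_ge1 qs (logn qs N) qsp.
  rewrite A_S // in tie.
  have h5 : ((cc qs e' - INR qs) * A qs (logn qs N) = 1)%R by lra.
  have h6 : (1 < cc qs e' - INR qs)%R by lra.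
  nra.
- split => //; apply: global.
    by rewrite muln_gt0 N0 prime_gt0.
  exact: Mloc.
Qed.
End NT7.

Module NT8.
Import eqtype ssrnat seq div prime bigop path fintype finfun tuple zify.
Import NT4.
Open Scope nat_scope.

Definition PL x := [seq p <- iota 0 x | prime p].
Definition Q x := \prod_(p <- PL x) p.
Definition piq x := count prime (iota 0 x).

Lemma PL_S x : PL x.+1 = PL x ++ (if prime x then [:: x] else [::]).
Proof. by rewrite /PL -addn1 iotaD filter_cat /= add0n; case: (prime x). Qed.

Lemma piq_S x : piq x.+1 = piq x + prime x.
Proof. by rewrite /piq -addn1 iotaD count_cat /= add0n addn0. Qed.

Lemma size_PL x : size (PL x) = piq x.
Proof. by rewrite /PL size_filter. Qed.

Lemma piq_lt x : piq x.+1 <= x.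
Proof.
elim: x => [|x IH]; first by [].
rewrite piq_S; case: (prime x.+1); lia.
Qed.

Lemma Q_S x : Q x.+1 = Q x * (if prime x then x else 1).
Proof. by rewrite /Q PL_S big_cat /=; case: (prime x); rewrite ?big_seq1 ?big_nil. Qed.

Lemma Q_dvd x N : (forall p, p < x -> prime p -> p %| N) -> Q x %| N.
Proof.
elim: x => [|x IH] h; first by rewrite /Q /PL /= big_nil dvd1n.
rewrite Q_S; case px: (prime x); last by rewrite muln1; apply: IH => p lt pp; apply: h => //; lia.
have co : coprime x (Q x).
  rewrite /Q big_seq; apply: (big_ind (fun m => coprime x m)).
  - exact: coprimen1.
  - by move=> a b ha hb; rewrite coprimeMr ha hb.
  move=> p; rewrite /PL mem_filter mem_iota => /andP[pp /andP[_ lt]].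
  rewrite prime_coprime //; apply/negP => hd.
  have := dvdn_leq (prime_gt0 pp) hd; rewrite add0n in lt; lia.
rewrite mulnC Gauss_dvd // h //= IH // => p lt pp; apply: h => //; lia.
Qed.

Lemma fact_Q x : (piq x)`! <= Q x.
Proof.
elim: x => [|x IH]; first by rewrite /Q /PL /= big_nil.
rewrite piq_S Q_S; case px: (prime x); last by rewrite addn0 muln1.
rewrite addn1 factS mulnC; apply: leq_mul => //.
case: x px IH => [|x] px IH; first by [].
have := piq_lt x; lia.
Qed.

Lemma PL_uniq x : uniq (PL x).
Proof. by rewrite /PL filter_uniq // iota_uniq. Qed.

Lemma decomp (P : seq nat) : uniq P -> all prime P ->
  forall m, 0 < m -> {subset primes m <= P} -> m = \prod_(p <- P) p ^ logn p m.
Proof.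
elim: P => [|p P IH] /=.
  move=> _ _ m m0 hm; rewrite big_nil; apply: primes_nil => //.
  case: (primes m) hm => // x s /(_ x); rewrite inE eqxx /=.
  by move=> /(_ isT).
move=> /andP[pP uP] /andP[pp aP] m m0 hm.
case: (@split_p p m pp m0) => m' [m'0 com Em lm].
have hm' : {subset primes m' <= P}.
  move=> q /(@primes_sub p m m' pp com m'0 Em m0) [qk qnp].
  by move: (hm q qk); rewrite inE (negbTE qnp).
rewrite big_cons {1}Em mulnC (IH uP aP m' m'0 hm'); congr muln.
apply: eq_big_seq => q qP.
have qnp : q != p by apply/eqP => eq; subst q; rewrite qP in pP.
have qp : prime q by move/allP: aP => /(_ q qP).
by rewrite -lm.
Qed.

Lemma erdos y : y <= (Nat.sqrt y).+1 * 2 ^ piq y.+1.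
Proof.
set R := Nat.sqrt y; set P := PL y.+1.
have uP : uniq P := PL_uniq _.
have aP : all prime P by apply/allP => p; rewrite mem_filter => /andP[].
pose s m := \prod_(p <- P) p ^ (logn p m)./2.
pose t m := \prod_(p <- P) p ^ odd (logn p m).
have dec : forall m, 0 < m -> m <= y -> m = s m * s m * t m.
  move=> m m0 my; rewrite {1}(@decomp P uP aP m m0).
    rewrite /s /t -!big_split /=; apply: eq_bigr => p _.
    by rewrite -!expnD -{1}(odd_double_half (logn p m)) -addnn addnC.
  move=> q; rewrite mem_primes mem_filter mem_iota => /and3P[qp _ qm].
  by rewrite qp /= add0n ltnS (leq_trans (dvdn_leq m0 qm)).
have tpos : forall m, 0 < t m.
  move=> m; rewrite /t big_seq; apply: (big_ind (fun x => 0 < x)) => //.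
    by move=> a b; rewrite muln_gt0 => -> ->.
  move=> p pP; have pp : prime p by move/allP: aP => /(_ p pP).
  by rewrite expn_gt0 prime_gt0.
have sR : forall m, 0 < m -> m <= y -> s m < R.+1.
  move=> m m0 my; rewrite ltnS /R.
  have h : s m * s m <= y.
    have h0 : s m * s m <= m by rewrite [X in _ <= X](dec m m0 my); apply: leq_pmulr; exact: tpos.
    exact: (leq_trans h0 my).
  have := Nat.sqrt_le_mono (s m * s m) y; rewrite Nat.sqrt_square => h2.
  apply/leP; apply: h2; apply/leP; by rewrite -multE.
pose F (i : 'I_y) : 'I_R.+1 * (size P).-tuple bool :=
  (inord (s i.+1), map_tuple (fun p => odd (logn p i.+1)) (in_tuple P)).
have Finj : injective F.
  move=> i j; rewrite /F => -[] Es0 Eb0.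
  have Es := congr1 (@nat_of_ord _) Es0; have Eb := Eb0.
  rewrite !inordK in Es; try apply: sR => //; try exact: ltn_ord.
  have Et : t i.+1 = t j.+1.
    apply: eq_big_seq => p pP.
    have := proj2 (eq_in_map _ _ _) Eb p pP; by move=> /= ->.
  apply: val_inj => /=; apply/eqP; rewrite -eqSS; apply/eqP.
  by rewrite (dec i.+1) // (dec j.+1) // Es Et.
have := @leq_card _ _ F Finj; rewrite card_ord card_prod card_ord card_tuple card_bool.
by rewrite /P size_PL.
Qed.

Lemma x_bound x : x <= 4 ^ (piq x).+1.
Proof.
case: x => [|y]; first by [].
have h := erdos y.
have := Nat.sqrt_spec y (Nat.le_0_l y).
set R := Nat.sqrt y in h *; set z := 2 ^ piq y.+1 in h *.
have -> : 4 ^ (piq y.+1).+1 = 4 * (z * z) by rewrite expnS /z -expnD addnn -mul2n expnM.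
move=> [h1 h2].
have hR : R <= z by nia.
nia.
Qed.
End NT8.

Module NT9.
Import eqtype ssrnat seq div prime bigop path fintype zify.
Import NT8.
Open Scope nat_scope.

Lemma exp_mono_r m n e : m <= n -> m ^ e <= n ^ e.
Proof. case: e => [|e] h //; by rewrite leq_exp2r. Qed.

Lemma growth c : exists k0, forall k, k0 <= k -> c ^ k.+1 <= k`!.
Proof.
case: (posnP c) => [->|c0]; first by exists 0 => k _; rewrite exp0n.
set d := 2 * c; set C := d ^ d.
have d0 : 0 < d by rewrite /d muln_gt0 c0.
have claim : forall k, d ^ k <= C * k`!.
  elim=> [|k IH]; first by rewrite expn0 fact0 muln1 /C expn_gt0 d0.
  case: (leqP k.+1 d) => hk.
    apply: (@leq_trans (d ^ d)); first exact: leq_pexp2l.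
    by apply: leq_pmulr; apply: fact_gt0.
  rewrite expnS factS mulnCA; apply: leq_mul => //; exact: ltnW.
exists (c * C) => k hk.
have h1 : c ^ k.+1 * 2 ^ k <= c * C * k`!.
  rewrite expnS -mulnA -expnMn (mulnC c 2) -/d -mulnA leq_mul2l (claim k) orbT //.
have h2 : c * C * k`! <= 2 ^ k * k`!.
  apply: leq_mul => //; apply: (leq_trans hk); apply: ltnW; exact: ltn_expl.
have := leq_trans h1 h2; rewrite mulnC leq_pmul2l //; exact: expn_gt0.
Qed.

Lemma prime_bound K : exists B, forall N p0, B <= N ->
  (forall p, p < p0 -> prime p -> p %| N) -> p0 ^ K <= N.
Proof.
case: (growth (4 ^ K)) => k0 hk0.
set X := 4 ^ k0.
exists (X ^ K).+1 => N p0 hN hdiv.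
have N0 : 0 < N by apply: leq_trans hN.
case: (leqP p0 X) => hp.
  apply: (leq_trans (@exp_mono_r p0 X K hp)); exact: ltnW.
have hb := x_bound p0.
have hk : k0 <= piq p0.
  rewrite leqNgt; apply/negP => lt.
  have : 4 ^ (piq p0).+1 <= X by rewrite /X leq_exp2l.
  move=> h; have := leq_trans hb h; rewrite leqNgt hp.
  by [].
apply: (@leq_trans ((4 ^ K) ^ (piq p0).+1)).
  rewrite -expnM mulnC expnM; exact: exp_mono_r.
apply: (leq_trans (hk0 _ hk)).
apply: (leq_trans (fact_Q p0)).
apply: dvdn_leq => //; exact: Q_dvd.
Qed.
End NT9.

Module NT10.
Import eqtype ssrnat seq div prime bigop path fintype.
Import NT NT2 NT3 NT4 NT7 NT9.
Open Scope nat_scope.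

Lemma expn_pow m k : m ^ k = Nat.pow m k.
Proof. elim: k => [|k IH] //; by rewrite expnS IH. Qed.

Lemma CA_f m : colossally_abundant m <->
  0 < m /\ exists e, (0 < e)%R /\ forall k, 0 < k -> (f e k <= f e m)%R.
Proof.
rewrite /colossally_abundant; split.
- move=> [/leP m1 [e [e0 h]]]; split => //; exists e; split => // k /leP k1.
  exact: h.
- move=> [m1 [e [e0 h]]]; split; first by apply/leP.
  exists e; split => // k /leP k1; exact: h.
Qed.

Lemma nat_part (n : nat -> nat) (Hincr : forall i : nat, (n i < n (S i))%coq_nat)
  (Hrange : forall m : nat, colossally_abundant m <-> exists i : nat, n i = m) :
  (forall i, 0 < n i) /\ (forall i, i < n i) /\ (forall i, n i <= n i.+1) /\
  forall K, exists I, forall i, I <= i -> n i.+1 ^ K <= n i ^ K.+1.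
Proof.
have inc : forall i, n i < n i.+1 by move=> i; apply/ltP.
have mono : forall i j, i <= j -> n i <= n j.
  move=> i j /subnKC <-; elim: (j - i) => [|d IH]; first by rewrite addn0.
  by rewrite addnS; apply: (leq_trans IH); apply: ltnW.
have pos : forall i, 0 < n i.
  by move=> i; have /CA_f [] := proj2 (Hrange (n i)) (ex_intro _ i erefl).
have gei : forall i, i < n i.
  elim=> [|i IH]; first exact: pos.
  exact: leq_ltn_trans IH (inc i).
have key : forall i, exists p0, n i.+1 <= n i * p0 /\ (forall p, p < p0 -> prime p -> p %| n i).
  move=> i.
  have /CA_f [N0 [e [e0 hmax]]] := proj2 (Hrange (n i)) (ex_intro _ i erefl).
  case: (@step (n i) e N0 e0 hmax) => p0 [q [e' [[pp0 _ below qp qp0] [e'0 hM]]]].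
  exists p0; split => //.
  have CAM : colossally_abundant (n i * q).
    apply/CA_f; split; first by rewrite muln_gt0 N0 prime_gt0.
    by exists e'.
  case: (proj1 (Hrange _) CAM) => j Ej.
  have ij : i < j.
    rewrite ltnNge; apply/negP => ji.
    have := mono _ _ ji; rewrite Ej => h.
    have : n i < n i * q by rewrite -{1}(muln1 (n i)) ltn_pmul2l // prime_gt1.
    by rewrite ltnNge h.
  apply: (leq_trans (mono _ _ ij)); rewrite Ej; exact: leq_mul.
split => //; split => //; split; first by move=> i; apply: ltnW.
move=> K; case: (prime_bound K) => B hB.
exists B => i Bi.
case: (key i) => p0 [h1 h2].
have hp : p0 ^ K <= n i by apply: hB h2; apply: leq_trans Bi (ltnW (gei i)).
apply: (@leq_trans ((n i * p0) ^ K)); first by case: K {hB hp} => // K; rewrite leq_exp2r.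
by rewrite expnMn expnSr leq_mul2l hp orbT.
Qed.
End NT10.

Open Scope R_scope.

Lemma ln_le' x y : 0 < x -> x <= y -> ln x <= ln y.
Proof.
intros hx hxy; destruct (Rle_lt_or_eq_dec _ _ hxy) as [h|h].
- left; apply ln_increasing; auto.
- rewrite h; apply Rle_refl.
Qed.

Lemma arch_nat eps : 0 < eps -> exists K : nat, / eps < INR K.
Proof.
intros he; destruct (archimed (/ eps)) as [h1 _].
exists (Z.to_nat (up (/ eps))).
rewrite INR_IZR_INZ Z2Nat.id; auto.
apply le_IZR; left; apply Rlt_trans with (/ eps); auto.
apply Rinv_0_lt_compat; auto.
Qed.

Theorem mainTheorem4 (n : nat -> nat)
  (Hincr : forall i : nat, (n i < n (S i))%nat)
  (Hrange : forall m : nat, colossally_abundant m <-> exists i : nat, n i = m) :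
  Un_cv (fun i : nat => ln (INR (n i)) / ln (INR (n (S i)))) 1.
Proof.
destruct (NT10.nat_part n Hincr Hrange) as [pos [gei [mon bound]]].
intros eps Heps.
destruct (arch_nat eps Heps) as [K HK].
destruct (bound K) as [I HI].
exists (S I); intros i Hi.
assert (HIi : is_true (ssrnat.leq I i)) by (apply (introT ssrnat.leP); lia).
specialize (HI i HIi).
assert (g1 : (1 < n i)%nat).
{ have := gei i. move=> h; apply (elimT ssrnat.ltP) in h. lia. }
assert (g2 : (n i <= n (S i))%nat) by (apply (elimT ssrnat.leP); apply mon).
assert (hni : 1 < INR (n i)) by (apply lt_1_INR; auto).
assert (hnSi : INR (n i) <= INR (n (S i))) by (apply le_INR; auto).
assert (HIR : INR (n (S i)) ^ K <= INR (n i) ^ (S K)).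
{ rewrite <- !pow_INR. apply le_INR. rewrite <- !NT10.expn_pow. apply (elimT ssrnat.leP). exact HI. }
assert (Hln : INR K * ln (INR (n (S i))) <= INR (S K) * ln (INR (n i))).
{ rewrite <- !ln_pow; try lra. apply ln_le'; auto. apply pow_lt; lra. }
set (a := ln (INR (n i))) in *.
set (b := ln (INR (n (S i)))) in *.
assert (ha : 0 < a) by (unfold a; rewrite <- ln_1; apply ln_increasing; lra).
assert (hab : a <= b) by (unfold a, b; apply ln_le'; lra).
assert (hK : 0 < INR K) by (apply Rlt_trans with (/ eps); auto; apply Rinv_0_lt_compat; auto).
assert (hKe : 1 < eps * INR K).
{ replace 1 with (eps * / eps) by (field; lra). apply Rmult_lt_compat_l; auto. }
rewrite S_INR in Hln.
unfold Rdist.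
assert (hb : 0 < b) by lra.
set (r := a / b).
assert (Ea : a = r * b) by (unfold r; field; lra).
rewrite Ea in Hln hab.
assert (r1 : r <= 1) by nra.
assert (r2 : INR K <= (INR K + 1) * r) by nra.
rewrite Rabs_left1; [|lra].
nra.
Qed.
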